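(* Let $R$ be a commutative ring with identity, let $I,J$ be finitely generated ideals of $R$, and let $N$ be an injective $R$-module. If $M$ is an $(I,J)$-prime $R$-module, then $\operatorname{Hom}_R(M,N)$ is an $(I,J)$-coprime $R$-module.
   Context: All rings are commutative with identity and modules are unital. An $R$-module $M$ is $(I,J)$-prime if for all $m\in M$, $IJm=0$ implies $Im=0$ or $Jm=0$. It is $(I,J)$-coprime if $IJM=IM$ or $IJM=JM$. *)

(* Defs.v *)
From HB Require Import structures.
From mathcomp Require Import all_boot all_order all_algebra.
From mathcomp Require Import boolp classical_sets functions.
Set Implicit Arguments. Unset Strict Implicit. Unset Printing Implicit Defensive.
Import GRing.Theory.
Local Open Scope ring_scope.

Section Hom.
Variables (R : comPzRingType) (M N : lmodType R).

Definition linearb : {pred M -> N} := fun f => `[< linear f >].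

Lemma linearb_submod : submod_closed linearb.
Proof.
split.
  by apply/asboolP => a x y; rewrite /= !scaler0 addr0.
move=> a f g /asboolP lf /asboolP lg; apply/asboolP => b x y /=.
have E z : (a *: f + g) z = a *: f z + g z by [].
rewrite !E lf lg !scalerDr !scalerA mulrC.
by rewrite addrACA.
Qed.

HB.instance Definition _ :=
  GRing.isSubmodClosed.Build R (M -> N) linearb linearb_submod.

Record homR := HomR { hom_val :> M -> N; hom_valP : hom_val \in linearb }.
HB.instance Definition _ := [isSub for hom_val].
HB.instance Definition _ := [Choice of homR by <:].
HB.instance Definition _ := [SubChoice_isSubLmodule of homR by <:].
End Hom.

Section Notions.
Variable R : comPzRingType.

Definition is_ideal (I : R -> Prop) : Prop :=
  [/\ I 0, (forall a b, I a -> I b -> I (a + b)) & (forall r a, I a -> I (r * a))].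

Definition fg_ideal (I : R -> Prop) : Prop :=
  exists s : seq R, forall x, I x <->
    exists c : 'I_(size s) -> R, x = \sum_(i < size s) c i * s`_i.

Definition prod_ideal (I J : R -> Prop) : R -> Prop := fun x =>
  exists n (a b : 'I_n -> R), (forall i, I (a i) /\ J (b i)) /\
    x = \sum_(i < n) a i * b i.

Definition ideal_smul (I : R -> Prop) (V : lmodType R) : V -> Prop := fun v =>
  exists n (a : 'I_n -> R) (m : 'I_n -> V), (forall i, I (a i)) /\
    v = \sum_(i < n) a i *: m i.

Definition ann_by (I : R -> Prop) (V : lmodType R) (m : V) : Prop :=
  forall x, I x -> x *: m = 0.

Definition IJ_prime (I J : R -> Prop) (V : lmodType R) : Prop :=
  forall m : V, ann_by (prod_ideal I J) m -> ann_by I m \/ ann_by J m.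

Definition IJ_coprime (I J : R -> Prop) (V : lmodType R) : Prop :=
  (forall v : V, ideal_smul (prod_ideal I J) v <-> ideal_smul I v) \/
  (forall v : V, ideal_smul (prod_ideal I J) v <-> ideal_smul J v).

Definition injective_module (N : lmodType R) : Prop :=
  forall (A B : lmodType R) (f : {linear A -> B}), injective f ->
  forall g : {linear A -> N}, exists h : {linear B -> N}, forall a, h (f a) = g a.
End Notions.

(* Main.v *)
From HB Require Import structures.
From mathcomp Require Import all_boot all_order all_algebra.
From mathcomp Require Import boolp classical_sets functions.
Require Import Defs.
Set Implicit Arguments. Unset Strict Implicit. Unset Printing Implicit Defensive.
Import GRing.Theory.
Local Open Scope ring_scope.

Section T.
Variables (R : comPzRingType) (M N : lmodType R).
Lemma hv_sum I (r : seq I) (F : I -> homR M N) (m : M) : (\sum_(i <- r) F i) m = \sum_(i <- r) F i m.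
Proof.
elim: r => [|x r IH]; first by rewrite !big_nil.
by rewrite !big_cons -IH.
Qed.
Lemma hv_scale a (f : homR M N) m : (a *: f) m = a *: f m.
Proof. by []. Qed.
Lemma hv_lin (f : homR M N) : linear f.
Proof. exact: (asboolP _ (hom_valP f)). Qed.
End T.

Section Key.
Variables (R : comPzRingType) (M N : lmodType R) (T : finType) (c : T -> R).
Definition phi (m : M) : T -> M := fun i => c i *: m.
Definition imb : {pred T -> M} := fun b => `[< exists m, phi m = b >].
Lemma imb_submod : submod_closed imb.
Proof.
split.
  apply/asboolP; exists 0; apply/funext => i; by rewrite /phi scaler0.
move=> a u v /asboolP [x hx] /asboolP [y hy]; apply/asboolP; exists (a *: x + y).
apply/funext => i; rewrite /phi -hx -hy /=.
rewrite (_ : (a *: phi x + phi y) i = a *: phi x i + phi y i) // /phi.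
by rewrite scalerDr !scalerA mulrC.
Qed.
HB.instance Definition _ :=
  GRing.isSubmodClosed.Build R (T -> M) imb imb_submod.
Record Asub := MkA { aval :> T -> M; avalP : aval \in imb }.
HB.instance Definition _ := [isSub for aval].
HB.instance Definition _ := [Choice of Asub by <:].
HB.instance Definition _ := [SubChoice_isSubLmodule of Asub by <:].

Definition iA (a : Asub) : T -> M := aval a.
Lemma iA_lin : linear iA.
Proof. by []. Qed.
HB.instance Definition _ := GRing.isLinear.Build R Asub (T -> M) _ iA iA_lin.
Lemma iA_inj : injective iA.
Proof. exact: val_inj. Qed.

Variable f : homR M N.
Hypothesis hf : forall m, (forall i, c i *: m = 0) -> f m = 0.

Lemma f_eq x y : phi x = phi y -> f x = f y.
Proof.
move=> e; apply/eqP; rewrite -subr_eq0; apply/eqP.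
have h := hv_lin f (-1) y x; rewrite !scaleN1r in h.
rewrite addrC -h.
apply: hf => i.
have := congr1 (fun g => g i) e; rewrite /phi => /= e'.
by rewrite scalerDr scalerN e' addNr.
Qed.


Definition pre (a : Asub) : M := xget 0 [set m | phi m = iA a].
Lemma preP a : phi (pre a) = iA a.
Proof.
apply: (xgetPex 0 (P := [set m | phi m = iA a])).
by case: a => b /= /asboolP [m hm]; exists m.
Qed.
Definition gA (a : Asub) : N := f (pre a).
Lemma gA_lin : linear gA.
Proof.
move=> k a b; rewrite /gA -hv_lin; apply: f_eq.
rewrite preP (iA_lin k a b) -!preP.
apply/funext => i; rewrite /phi /=.
rewrite (_ : (k *: phi (pre a) + phi (pre b)) i = k *: phi (pre a) i + phi (pre b) i) // /phi.
by rewrite scalerDr !scalerA mulrC.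
Qed.
HB.instance Definition _ := GRing.isLinear.Build R Asub N _ gA gA_lin.

Definition ei (i : T) (m : M) : T -> M := fun j => if j == i then m else 0.
Lemma ei_lin i : linear (ei i).
Proof.
move=> k x y; apply/funext => j.
rewrite (_ : (k *: ei i x + ei i y) j = k *: ei i x j + ei i y j) // /ei.
by case: (j == i); rewrite ?scaler0 ?addr0.
Qed.

Lemma key (hN : injective_module N) :
  exists g : T -> homR M N, f = \sum_(i : T) c i *: g i.
Proof.
have [h hh] := hN _ _ iA iA_inj gA.
have hl i : (fun m => h (ei i m)) \in @linearb R M N.
  apply/asboolP => k x y /=; by rewrite ei_lin linearP.
exists (fun i => HomR (hl i)).
apply: val_inj; apply/funext => m /=.
rewrite -[LHS]/(f m).
rewrite (_ : val (\sum_i c i *: HomR (hl i)) m = (\sum_i c i *: HomR (hl i)) m) //.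
rewrite hv_sum.
have am : phi m \in imb by apply/asboolP; exists m.
have e1 : f m = f (pre (MkA am)) := f_eq (esym (preP (MkA am))).
rewrite e1 -[f (pre _)]/(gA (MkA am)) -hh.
have e2 : iA (MkA am) = \sum_i ei i (c i *: m).
  apply/funext => j; rewrite fct_sumE /= /phi /ei.
  rewrite (bigD1 j) //= eqxx big1 ?addr0 // => k /negbTE.
  by rewrite eq_sym => ->.
transitivity (h (\sum_i ei i (c i *: m))); first exact: (congr1 (fun x => h x) e2).
rewrite linear_sum; apply: eq_bigr => i _.
rewrite hv_scale /=.
have e0 : ei i 0 = 0 by apply/funext => j; rewrite /ei; case: (j == i).
by rewrite -[c i *: m]addr0 ei_lin linearD linearZ e0 linear0 addr0.
Qed.

End Key.

Section Main.
Variable R : comPzRingType.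

Lemma ideal_sum (K : R -> Prop) (hK : is_ideal K) n (F : 'I_n -> R) :
  (forall i, K (F i)) -> K (\sum_i F i).
Proof.
case: hK => K0 KD _ hF.
by apply: (big_ind K) => // i _; apply: hF.
Qed.

Lemma prod_subI (I J : R -> Prop) (hI : is_ideal I) x :
  prod_ideal I J x -> I x.
Proof.
case=> n [a [b [hab ->]]]; apply: ideal_sum => // i.
case: hI => _ _ hM; rewrite mulrC; apply: hM; exact: (hab i).1.
Qed.

Lemma prod_sym (I J : R -> Prop) x : prod_ideal I J x -> prod_ideal J I x.
Proof.
case=> n [a [b [hab ->]]]; exists n, b, a; split.
  by move=> i; have [] := hab i.
by apply: eq_bigr => i _; rewrite mulrC.
Qed.

Lemma gen_in (I : R -> Prop) (s : seq R) :
  (forall x, I x <-> exists c : 'I_(size s) -> R, x = \sum_(i < size s) c i * s`_i) ->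
  forall k : 'I_(size s), I s`_k.
Proof.
move=> hs k; apply/hs; exists (fun i => (i == k)%:R).
rewrite (bigD1 k) //= eqxx mul1r big1 ?addr0 // => i /negbTE ->.
by rewrite mul0r.
Qed.

Lemma ann_gen (V : lmodType R) (I : R -> Prop) (s : seq R) (w : V) :
  (forall x, I x <-> exists c : 'I_(size s) -> R, x = \sum_(i < size s) c i * s`_i) ->
  (forall k : 'I_(size s), s`_k *: w = 0) -> ann_by I w.
Proof.
move=> hs hw x /hs [c ->]; rewrite scaler_suml big1 // => i _.
by rewrite -scalerA hw scaler0.
Qed.

Lemma ann_add (V : lmodType R) (K : R -> Prop) (u w : V) :
  ann_by K u -> ann_by K w -> ann_by K (u + w).
Proof. by move=> hu hw x hx; rewrite scalerDr hu ?hw ?addr0. Qed.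

Lemma ann_sub (V : lmodType R) (K : R -> Prop) (u w : V) :
  ann_by K u -> ann_by K w -> ann_by K (u - w).
Proof. by move=> hu hw x hx; rewrite scalerDr scalerN hu ?hw ?subrr. Qed.

Lemma cases (I J : R -> Prop) (hI : is_ideal I) (hJ : is_ideal J) (M : lmodType R) :
  IJ_prime I J M ->
  (forall m : M, ann_by (prod_ideal I J) m -> ann_by I m) \/
  (forall m : M, ann_by (prod_ideal I J) m -> ann_by J m).
Proof.
move=> Hp.
case: (EM (forall m : M, ann_by (prod_ideal I J) m -> ann_by I m)) => [h|hn]; first by left.
right=> m2 hm2.
have [m1 h1 n1] := (existsPNP _ _).2 hn.
have j1 : ann_by J m1 by case: (Hp m1 h1).
case: (Hp m2 hm2) => [i2|//].
case: (Hp (m1 + m2) (ann_add h1 hm2)) => [i12|j12].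
  by exfalso; apply: n1; have := ann_sub i12 i2; rewrite (addrK m2 m1).
by have := ann_sub j12 j1; rewrite (addrC m1 m2) addrK.
Qed.
End Main.

Lemma smul_fin (R : comPzRingType) (K : R -> Prop) (V : lmodType R) (T : finType)
  (c : T -> R) (gg : T -> V) : (forall i, K (c i)) -> ideal_smul K (\sum_i c i *: gg i).
Proof.
move=> hc; exists #|T|, (fun k => c (enum_val k)), (fun k => gg (enum_val k)); split => //.
rewrite -[LHS](@eq_bigl _ _ _ _ _ (fun i => i \in T)) //.
by rewrite big_enum_val.
Qed.

Lemma hv0 (R : comPzRingType) (M N : lmodType R) (g : homR M N) : g 0 = 0.
Proof.
have := hv_lin g (-1) 0 0; rewrite !scaleN1r oppr0 addr0 addNr; exact.
Qed.

Lemma hvZ (R : comPzRingType) (M N : lmodType R) (g : homR M N) a m : g (a *: m) = a *: g m.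
Proof. by have := hv_lin g a m 0; rewrite !addr0 hv0 addr0. Qed.

Lemma smul_mono (R : comPzRingType) (K K' : R -> Prop) (V : lmodType R) (v : V) :
  (forall x, K x -> K' x) -> ideal_smul K v -> ideal_smul K' v.
Proof. by move=> hK [n [a [m [ha ->]]]]; exists n, a, m; split => // i; apply: hK. Qed.

Lemma half (R : comPzRingType) (I J : R -> Prop) (hI : is_ideal I) (hJ : is_ideal J)
  (s t : seq R)
  (hs : forall x, I x <-> exists c : 'I_(size s) -> R, x = \sum_(i < size s) c i * s`_i)
  (ht : forall x, J x <-> exists c : 'I_(size t) -> R, x = \sum_(i < size t) c i * t`_i)
  (M N : lmodType R) (hN : injective_module N)
  (H : forall m : M, ann_by (prod_ideal I J) m -> ann_by I m) (v : homR M N) :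
  ideal_smul (prod_ideal I J) v <-> ideal_smul I v.
Proof.
split; first by apply: smul_mono => x; apply: prod_subI.
case=> n [a [g [ha hv]]].
have hf : forall m, (forall pq : 'I_(size s) * 'I_(size t), (s`_pq.1 * t`_pq.2) *: m = 0) -> v m = 0.
  move=> m hm.
  have hIJ : ann_by (prod_ideal I J) m.
    move=> x [k [a' [b' [hab ->]]]]; rewrite scaler_suml big1 // => i _.
    have [ia jb] := hab i.
    rewrite -scalerA; apply: (ann_gen hs _ ia) => p.
    rewrite scalerA mulrC -scalerA; apply: (ann_gen ht _ jb) => q.
    by rewrite scalerA mulrC; apply: (hm (p, q)).
  have hIm := H m hIJ.
  rewrite hv hv_sum big1 // => i _; rewrite hv_scale -hvZ (hIm _ (ha i)); exact: hv0.
have [gg e] := key hf hN.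
rewrite e.
apply: smul_fin => k; exists 1%N, (fun _ => s`_k.1), (fun _ => t`_k.2); split.
  by move=> _; split; [apply: (gen_in hs) | apply: (gen_in ht)].
by rewrite big_ord1.
Qed.


Theorem mainTheorem5 (R : comPzRingType) (I J : R -> Prop)
  (hI : is_ideal I) (hJ : is_ideal J) (fgI : fg_ideal I) (fgJ : fg_ideal J)
  (M N : lmodType R) (hN : injective_module N) :
  IJ_prime I J M -> IJ_coprime I J (homR M N).
Proof.
move=> Hp; case: fgI => s hs; case: fgJ => t ht.
case: (cases hI hJ Hp) => H; [left | right] => v.
  exact: (half hI hJ hs ht hN H).
have H' : forall m : M, ann_by (prod_ideal J I) m -> ann_by J m.
  by move=> m hm; apply: H => x /prod_sym; apply: hm.
have := half hJ hI ht hs hN H' v.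
move=> [h1 h2]; split => h.
  by apply: h1; apply: smul_mono h => x; apply: prod_sym.
by apply: smul_mono (h2 h) => x; apply: prod_sym.
Qed.
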